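(* For every integer $r\ge 2$ the following hold: (a) every point of $R_r$ lies above $\ell_{r-1}$; (b) every point of $L_r$ lies below $\ell_{r-1}'$; (c) no point of $L_{r-1}$ lies below $\ell_{r-1}$; (d) no point of $L_{r-1}'$ lies below $\ell_{r-1}'$; (e) no point of $R_{r-1}$ lies above $\ell_{r-1}$; (f) no point of $R_{r-1}'$ lies above $\ell_{r-1}'$.
   Context: Define finite sets $P_r\subset\mathbb{Z}^2$ for integers $r\ge 0$ recursively: $P_0:=\{(0,0)\}$; for $r\ge 1$, $L_r:=P_{r-1}$, $R_r:=\{(x+\delta_r,\,y+\delta_r'):(x,y)\in L_r\}$ and $P_r:=L_r\cup R_r$, where $\delta_r:=3\cdot 4^{r-1}$ and $\delta_r':=(3r+1)\cdot 4^{r-1}$. For $r\ge 1$, let $\ell_r$ be the straight line through the rightmost point (largest $x$-coordinate) of $L_r$ and the leftmost point (smallest $x$-coordinate) of $R_r$. For $r\ge 2$, $R_r$ is the translate of $P_{r-1}=L_{r-1}\cup R_{r-1}$ by the vector $(\delta_r,\delta_r')$; let $L_{r-1}'$, $R_{r-1}'$ and $\ell_{r-1}'$ denote the translates of $L_{r-1}$, $R_{r-1}$ and of the line $\ell_{r-1}$, respectively, by $(\delta_r,\delta_r')$ (so $R_r=L_{r-1}'\cup R_{r-1}'$). *)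

(* Defs.v *)
From mathcomp Require Import all_boot all_order all_algebra.
Set Implicit Arguments. Unset Strict Implicit. Unset Printing Implicit Defensive.
Import Order.TTheory GRing.Theory Num.Theory.
Local Open Scope ring_scope.

Definition pt := (int * int)%type.

Definition delta (r : nat) : int := (3 * 4 ^ r.-1)%N%:Z.
Definition delta' (r : nat) : int := ((3 * r + 1) * 4 ^ r.-1)%N%:Z.

Definition shift (v : pt) (p : pt) : pt := (p.1 + v.1, p.2 + v.2).
Definition vec (r : nat) : pt := (delta r, delta' r).

Fixpoint P (r : nat) : seq pt :=
  match r with
  | 0 => [:: (0, 0)]
  | r'.+1 => P r' ++ map (shift (vec r'.+1)) (P r')
  end.

Definition Lset (r : nat) : seq pt := P r.-1.
Definition Rset (r : nat) : seq pt := map (shift (vec r)) (P r.-1).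

(* a point with largest / smallest x-coordinate of a (nonempty) list
   (x-coordinates in P_r are pairwise distinct, so this is the unique one) *)
Definition rightmost (s : seq pt) : pt :=
  foldr (fun a b => if b.1 < a.1 then a else b) (head (0, 0) s) s.
Definition leftmost (s : seq pt) : pt :=
  foldr (fun a b => if a.1 < b.1 then a else b) (head (0, 0) s) s.

(* a (non-vertical) line given by two points p, q with p.1 <> q.1 *)
Definition line := (pt * pt)%type.

Definition line_y (l : line) (x : int) : rat :=
  let: (p, q) := l in
  (p.2%:~R : rat) + ((q.2 - p.2)%:~R / (q.1 - p.1)%:~R) * ((x - p.1)%:~R).

Definition above (l : line) (z : pt) : Prop := line_y l z.1 < (z.2%:~R : rat).
Definition below (l : line) (z : pt) : Prop := (z.2%:~R : rat) < line_y l z.1.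

Definition ell (r : nat) : line := (rightmost (Lset r), leftmost (Rset r)).

Definition Lset' (r : nat) : seq pt := map (shift (vec r)) (Lset r.-1).
Definition Rset' (r : nat) : seq pt := map (shift (vec r)) (Rset r.-1).
Definition ell' (r : nat) : line :=
  (shift (vec r) (ell r.-1).1, shift (vec r) (ell r.-1).2).

(* Main.v *)
Require Import Defs.
From mathcomp Require Import all_boot all_order all_algebra zify ring lra.
Import Order.TTheory GRing.Theory Num.Theory.
Set Implicit Arguments. Unset Strict Implicit.
Local Open Scope ring_scope.

Fixpoint S (n : nat) : pt := match n with 0 => (0,0) | n'.+1 => shift (vec n'.+1) (S n') end.

Lemma S_eq n : S n = ((4^n)%N%:Z - 1, (n * 4^n)%N%:Z).
Proof.
elim: n => [//|n IH] /=. rewrite IH /shift /vec /delta /delta' /=.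
congr (_,_); rewrite !expnS; lia.
Qed.

Lemma S_in n : S n \in P n.
Proof. elim: n => [|n IH] /=; first by rewrite inE. by rewrite mem_cat map_f ?orbT. Qed.

Lemma zero_in n : (0,0) \in P n.
Proof. elim: n => [|n IH] /=; first by rewrite inE. by rewrite mem_cat IH. Qed.

Lemma P_bounds n (z : int * int) : z \in P n ->
  [/\ 0 <= z.1, z.1 <= (4^n)%N%:Z - 1, (z.1 = 0 -> z = (0,0)) & (z.1 = (4^n)%N%:Z - 1 -> z = S n)].
Proof.
elim: n z => [|n IH] z /=.
  by rewrite inE => /eqP ->; split => //; rewrite expn0.
rewrite mem_cat => /orP [/IH [h1 h2 h3 h4] | /mapP [w /IH [h1 h2 h3 h4] ->]];
  rewrite /shift /vec /delta /=.
  split => //; first by move: h1 h2; rewrite expnS; lia.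
  move=> h; exfalso; move: h h2; rewrite expnS; lia.
split.
- lia.
- move: h2; rewrite expnS; lia.
- move=> h; exfalso; move: h h1; lia.
- move=> h; rewrite (h4 _) //; move: h h2; rewrite expnS; lia.
Qed.

Lemma foldr_max (i : pt) s : let m := foldr (fun a b => if b.1 < a.1 then a else b) i s in
  m \in i :: s /\ forall y, y \in i :: s -> y.1 <= m.1.
Proof.
elim: s => [|a s [IH1 IH2]] /=.
  by split; [rewrite inE | move=> y; rewrite inE => /eqP ->].
set b := foldr _ _ _ in IH1 IH2 *.
case: ifP => h; split.
- by rewrite !inE eqxx orbT.
- move=> y; rewrite !inE => /or3P [/eqP->|/eqP->|hy].
  + apply: ltW; apply: le_lt_trans h; apply: IH2; exact: mem_head.
  + by [].
  + apply: ltW; apply: le_lt_trans h; apply: IH2; by rewrite inE hy orbT.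
- move: IH1; rewrite !inE => /orP [->//|->]; by rewrite !orbT.
- move=> y; rewrite !inE => /or3P [/eqP->|/eqP->|hy].
  + apply: IH2; exact: mem_head.
  + by rewrite leNgt h.
  + apply: IH2; by rewrite inE hy orbT.
Qed.

Lemma foldr_min (i : pt) s : let m := foldr (fun a b => if a.1 < b.1 then a else b) i s in
  m \in i :: s /\ forall y, y \in i :: s -> m.1 <= y.1.
Proof.
elim: s => [|a s [IH1 IH2]] /=.
  by split; [rewrite inE | move=> y; rewrite inE => /eqP ->].
set b := foldr _ _ _ in IH1 IH2 *.
case: ifP => h; split.
- by rewrite !inE eqxx orbT.
- move=> y; rewrite !inE => /or3P [/eqP->|/eqP->|hy].
  + apply: ltW; apply: lt_le_trans h _; apply: IH2; exact: mem_head.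
  + by [].
  + apply: ltW; apply: lt_le_trans h _; apply: IH2; by rewrite inE hy orbT.
- move: IH1; rewrite !inE => /orP [->//|->]; by rewrite !orbT.
- move=> y; rewrite !inE => /or3P [/eqP->|/eqP->|hy].
  + apply: IH2; exact: mem_head.
  + by rewrite leNgt h.
  + apply: IH2; by rewrite inE hy orbT.
Qed.

Lemma head_in {s : seq pt} {x} : x \in s -> head (0,0) s \in s.
Proof. by case: s => //= a s _; exact: mem_head. Qed.

Lemma rightmost_P n : rightmost (P n) = S n.
Proof.
rewrite /rightmost; have [h1 h2] := foldr_max (head (0,0) (P n)) (P n).
set m := foldr _ _ _ in h1 h2 *.
have hm : m \in P n.
  by move: h1; rewrite inE => /orP [/eqP e|//]; rewrite e; apply: (head_in (zero_in n)).
have [_ b _ e] := P_bounds hm.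
apply: e; apply/eqP; rewrite eq_le b /=.
have := h2 (S n); rewrite inE S_in orbT => /(_ isT).
by rewrite S_eq.
Qed.

Lemma leftmost_R n : leftmost (map (shift (vec n.+1)) (P n)) = vec n.+1.
Proof.
rewrite /leftmost; set s := map _ _.
have [h1 h2] := foldr_min (head (0,0) s) s.
set m := foldr _ _ _ in h1 h2 *.
have z0 : shift (vec n.+1) (0,0) \in s by rewrite map_f // zero_in.
have hm : m \in s.
  by move: h1; rewrite inE => /orP [/eqP e|//]; rewrite e; apply: (head_in z0).
move: hm h2 => /mapP [w hw ->] h2.
have := h2 (shift (vec n.+1) (0,0)); rewrite inE z0 orbT => /(_ isT).
rewrite /shift /= => hle.
have [a _ c _] := P_bounds hw.
rewrite c; last by lia.
by rewrite /= !add0r.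
Qed.

Definition D (l : line) (z : pt) : int :=
  let: (p, q) := l in (q.1 - p.1) * (z.2 - p.2) - (q.2 - p.2) * (z.1 - p.1).

Lemma D_eq (p q z : pt) : p.1 < q.1 ->
  (z.2%:~R : rat) - line_y (p, q) z.1 = (D (p, q) z)%:~R / (q.1 - p.1)%:~R.
Proof.
move=> h.
have hne : ((q.1 - p.1)%:~R : rat) != 0 by rewrite intr_eq0 subr_eq0 gt_eqF.
rewrite /line_y /D.
move: hne; rewrite !rmorphB !rmorphM /= => hne.
by field.
Qed.

Lemma above_iff (p q z : pt) : p.1 < q.1 -> above (p, q) z <-> 0 < D (p, q) z.
Proof.
move=> h; have hd : (0 : rat) < (q.1 - p.1)%:~R by rewrite ltr0z subr_gt0.
rewrite /above -subr_gt0 D_eq // ltr_pdivlMr // mul0r ltr0z; split => //.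
Qed.

Lemma below_iff (p q z : pt) : p.1 < q.1 -> below (p, q) z <-> D (p, q) z < 0.
Proof.
move=> h; have hd : (0 : rat) < (q.1 - p.1)%:~R by rewrite ltr0z subr_gt0.
rewrite /below -subr_lt0 D_eq // ltr_pdivrMr // mul0r ltrz0; split => //.
Qed.

Lemma D_shift v p q z : D (shift v p, shift v q) (shift v z) = D (p, q) z.
Proof. rewrite /D /shift /=; ring. Qed.

Definition Hl (p q : pt) (z : pt) : int := (q.1 - p.1) * z.2 - (q.2 - p.2) * z.1.

Lemma D_H p q z : D (p, q) z = Hl p q z - Hl p q p.
Proof. rewrite /D /Hl; ring. Qed.
Lemma D_shl v p q z : D (shift v p, shift v q) z = Hl p q z - Hl p q p - Hl p q v.
Proof. rewrite /D /Hl /shift /=; ring. Qed.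
Lemma Hl_shift p q v z : Hl p q (shift v z) = Hl p q z + Hl p q v.
Proof. rewrite /Hl /shift /=; ring. Qed.
Lemma Hl_qp p q : Hl p q q = Hl p q p.
Proof. rewrite /Hl; ring. Qed.

Lemma Hl_bounds p q n : (forall k, (0 < k <= n)%N -> Hl p q (vec k) <= 0) ->
  forall z, z \in P n -> Hl p q (S n) <= Hl p q z <= 0.
Proof.
elim: n => [|n IH] hk z /=.
  by rewrite inE => /eqP ->; rewrite /Hl /= !mulr0 subrr lexx.
have hk' : forall k, (0 < k <= n)%N -> Hl p q (vec k) <= 0.
  by move=> k /andP [h1 h2]; apply: hk; rewrite h1 /= (leq_trans h2).
have hv := hk n.+1 (leqnn _).
have hS := IH hk' _ (S_in n).
rewrite Hl_shift mem_cat => /orP [/(IH hk') | /mapP [w /(IH hk') hw ->]].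
  move: hS hv; lia.
rewrite Hl_shift; move: hw hv; lia.
Qed.

Lemma F1 n k : (0 < k <= n)%N -> Hl (S n) (vec n.+1) (vec k) <= 0.
Proof.
case: k => [//|j] /= hj.
rewrite /Hl S_eq /vec /delta /delta' /=.
have hq : (n < 4 ^ n)%N by apply: ltn_expl.
move: (4 ^ n)%N hq => t ht.
have h0 : (0 < 4 ^ j)%N by rewrite expn_gt0.
move: (4 ^ j)%N h0 => u hu.
nia.
Qed.

Lemma F2 n : 0 < Hl (S n) (vec n.+1) (S n) + Hl (S n) (vec n.+1) (vec n.+2).
Proof.
rewrite /Hl S_eq /vec /delta /delta' /= expnS.
have hq : (0 < 4 ^ n)%N by rewrite expn_gt0.
move: (4 ^ n)%N hq => t ht.
nia.
Qed.

Theorem lemma3 (r : nat) : (2 <= r)%N ->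
  (forall z, z \in Rset r -> above (ell r.-1) z) /\
  (forall z, z \in Lset r -> below (ell' r) z) /\
  (forall z, z \in Lset r.-1 -> ~ below (ell r.-1) z) /\
  (forall z, z \in Lset' r -> ~ below (ell' r) z) /\
  (forall z, z \in Rset r.-1 -> ~ above (ell r.-1) z) /\
  (forall z, z \in Rset' r -> ~ above (ell' r) z).
Proof.
case: r => [|[|n]] // _.
have Hell : ell n.+1 = (S n, vec n.+1).
  by rewrite /ell /Lset /Rset /= rightmost_P leftmost_R.
have Hell' : ell' n.+2 = (shift (vec n.+2) (S n), shift (vec n.+2) (vec n.+1)).
  by rewrite /ell'; change (n.+2.-1) with n.+1; rewrite Hell.
rewrite /= Hell Hell' /Rset' /Lset' /Rset /Lset /=.
have hlt : (S n).1 < (vec n.+1).1.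
  rewrite S_eq /vec /delta /=; lia.
have hlt' : (shift (vec n.+2) (S n)).1 < (shift (vec n.+2) (vec n.+1)).1.
  by rewrite /shift /= ltrD2r.
set H := Hl (S n) (vec n.+1).
have hB : forall z, z \in P n -> H (S n) <= H z <= 0.
  by apply: Hl_bounds; apply: F1.
have hF2 := F2 n; rewrite -/H in hF2.
have hS := hB _ (S_in n).
have hQ : H (vec n.+1) = H (S n) by rewrite /H Hl_qp.
split; [|split; [|split; [|split; [|split]]]].
- move=> z /mapP [w hw ->]; apply/above_iff => //.
  rewrite D_H Hl_shift -/H.
  move: hw; rewrite /= mem_cat => /orP [/hB hw | /mapP [u /hB hu ->]].
    move: hw hS hF2; lia.
  rewrite /H Hl_shift -/H; move: hu hS hF2 hQ; lia.
- move=> z hz; apply/below_iff => //.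
  rewrite D_shl -/H.
  move: hz; rewrite /= mem_cat => /orP [/hB hw | /mapP [u /hB hu ->]].
    move: hw hS hF2; lia.
  rewrite /H Hl_shift -/H; move: hu hS hF2 hQ; lia.
- move=> z /hB hz; rewrite below_iff // D_H -/H; move: hz; lia.
- move=> z /mapP [w /hB hw ->]; rewrite below_iff // D_shift D_H -/H; move: hw; lia.
- move=> z /mapP [w /hB hw ->]; rewrite above_iff // D_H Hl_shift -/H; move: hw hQ; lia.
- move=> z /mapP [w /mapP [u /hB hu ->] ->]; rewrite above_iff // D_shift D_H Hl_shift -/H.
  move: hu hQ; lia.
Qed.
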